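(* Let $\mathbb{0}=\{x\in\omega^\omega : x(n)=0 \text{ for all but finitely many } n\}$ and consider $P=\omega^\omega\setminus\mathbb{0}$ ordered by $\le^*$. Then $\mathfrak{icp}(P,\le^* )=\mathfrak{b}$ and $\mathfrak{cp}(P,\le^* )=\mathfrak{d}$.
   Context: For $x,y\in\omega^\omega$, $x\le^* y$ means $x(n)\le y(n)$ for all but finitely many $n$. For a poset (or preorder) $(P,\le)$: $F\subseteq P$ is a comparable family if for every $p\in P$ there is $q\in F$ with $p\le q$ or $q\le p$; $F$ is an incomparable family if for every $p\in P$ there is $q\in F$ with $p\not\le q$ and $q\not\le p$. $\mathfrak{cp}(P,\le)$ is the minimal size of a comparable family and $\mathfrak{icp}(P,\le)$ is the minimal size of an incomparable family. $\mathfrak{b}$ and $\mathfrak{d}$ are the usual bounding and dominating numbers of $(\omega^\omega,\le^* )$. *)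

(* Defs.v *)
From mathcomp Require Import all_boot.
From mathcomp Require Import boolp classical_sets cardinality.
Set Implicit Arguments. Unset Strict Implicit. Unset Printing Implicit Defensive.
Local Open Scope classical_set_scope.
Local Open Scope card_scope.

Definition baire := nat -> nat.

Definition le_star (x y : baire) : Prop := exists N, forall n, (N <= n)%N -> (x n <= y n)%N.

Definition zero_set : set baire := [set x | exists N, forall n, (N <= n)%N -> x n = 0%N].
Definition Pset : set baire := ~` zero_set.

Definition comparable_family (F : set baire) : Prop :=
  F `<=` Pset /\
  forall p, Pset p -> exists2 q, F q & (le_star p q \/ le_star q p).
Definition incomparable_family (F : set baire) : Prop :=
  F `<=` Pset /\
  forall p, Pset p -> exists2 q, F q & (~ le_star p q /\ ~ le_star q p).

Definition unbounded_family (F : set baire) : Prop :=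
  ~ exists g : baire, forall f, F f -> le_star f g.
Definition dominating_family (F : set baire) : Prop :=
  forall g : baire, exists2 f, F f & le_star g f.

(* A is a member of Fam of minimal cardinality; its cardinality is min{|X| : X in Fam} *)
Definition is_min_card (Fam : set baire -> Prop) (A : set baire) : Prop :=
  Fam A /\ forall B, Fam B -> A #<= B.

Definition min_card_equal (Fam1 Fam2 : set baire -> Prop) : Prop :=
  exists A B, is_min_card Fam1 A /\ is_min_card Fam2 B /\ A #= B.

(* Main.v *)
Require Import Defs.
From mathcomp Require Import all_boot.
From mathcomp Require Import boolp classical_sets cardinality.
From mathcomp Require Import zify.
Set Implicit Arguments. Unset Strict Implicit. Unset Printing Implicit Defensive.
Local Open Scope classical_set_scope.
Local Open Scope card_scope.

Lemma card_le_of (A B : set baire) (f : baire -> baire) :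
  (forall x, A x -> B (f x)) -> (forall x y, A x -> A y -> f x = f y -> x = y) ->
  A #<= B.
Proof.
move=> fAB finj; apply/pcard_leP/injfunPex; exists f.
  by move=> x Ax; apply: fAB.
by move=> x y /set_mem Ax /set_mem Ay; apply: finj.
Qed.

Lemma min_exists (Fam : set baire -> Prop) : (exists A, Fam A) ->
  exists A, is_min_card Fam A.
Proof.
move=> [A0 FA0].
case: (pselect (exists A, Fam A /\ A = set0)) => [[A [FA eA]]|H0].
  by exists A; split => // B _; rewrite eA; exact: card_ge0.
pose I := {A : set baire | Fam A}.
pose i00 : I := exist _ A0 FA0.
pose Pm : set (set (I -> baire)) := fun M =>
  (forall t, M t -> forall i, sval i (t i)) /\
  (forall i t s, M t -> M s -> t i = s i -> t = s).
have [M [[PM1 PM2] maxM]] : exists M, Pm M /\ forall B, M `<` B -> ~ Pm B.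
  apply: Zorn_bigcup => F FP Ftot; split.
    by move=> t [X FX Xt] i; exact: (FP X FX).1.
  move=> i t s [X FX Xt] [Y FY Ys] ets.
  have [XY|YX] := Ftot X Y FX FY.
    by apply: (FP Y FY).2 ets => //; exact: XY.
  by apply: (FP X FX).2 ets => //; exact: YX.
have [i0 Hi0] : exists i0, forall x, sval i0 x -> exists t, M t /\ t i0 = x.
  apply/not_existsP => Hn.
  have H : forall i, exists x, sval i x /\ forall t, M t -> t i <> x.
    move=> i; have := Hn i; move/existsNP => [x /not_implyP [ix Hx]].
    by exists x; split => // t Mt eti; apply: Hx; exists t.
  have [t0 Ht0] := choice H.
  apply: (maxM (M `|` [set t0])); last first.
    split.
      by move=> t [Mt|->] i; [exact: PM1|exact: (Ht0 i).1].
    move=> i t s [Mt|->] [Ms|->] ets //.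
    - exact: PM2 ets.
    - by case: ((Ht0 i).2 t Mt ets).
    - by case: ((Ht0 i).2 s Ms (esym ets)).
  split; first by move=> t Mt; left.
  by move=> /(_ t0 (or_intror erefl)) Mt0; exact: ((Ht0 i00).2 t0 Mt0 erefl).
have H2 : forall x, exists t, sval i0 x -> M t /\ t i0 = x.
  move=> x; case: (pselect (sval i0 x)) => ix.
    by have [t Ht] := Hi0 x ix; exists t.
  by exists (fun _ => x).
have [tf Htf] := choice H2.
exists (sval i0); split; first exact: (svalP i0).
move=> B FB; pose j : I := exist _ B FB.
apply: (@card_le_of _ _ (fun x => tf x j)).
  by move=> x ix; have := PM1 _ (Htf x ix).1 j.
move=> x y ix iy e.
have := PM2 j _ _ (Htf x ix).1 (Htf y iy).1 e => e2.
by rewrite -(Htf x ix).2 -(Htf y iy).2 e2.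
Qed.

Lemma transfer (Fam1 Fam2 : set baire -> Prop) :
  (forall A, Fam1 A -> exists B, Fam2 B /\ B #<= A) ->
  (forall B, Fam2 B -> exists A, Fam1 A /\ A #<= B) ->
  (exists A, Fam1 A) -> min_card_equal Fam1 Fam2.
Proof.
move=> h12 h21 ne; have [A [FA Amin]] := min_exists ne.
have [B [FB BA]] := h12 A FA.
have [A2 [FA2 A2B]] := h21 B FB.
exists A, B; split; first by [].
split.
  split=> // B' FB'; have [A' [FA' A'B']] := h21 B' FB'.
  apply: (card_le_trans BA); apply: (card_le_trans (Amin _ FA')) => //.
apply: Cantor_Bernstein => //.
exact: card_le_trans (Amin _ FA2) A2B.
Qed.

Definition Fs (f : baire) (m : nat) : nat := (\sum_(i < m.+1) f i + m.+1)%N.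

Lemma sum_ge (f : baire) i m : (i <= m)%N -> (f i <= \sum_(j < m.+1) f j)%N.
Proof.
move=> im; rewrite (bigD1 (Ordinal (im : i < m.+1))) //=; exact: leq_addr.
Qed.

Lemma sum_mono (f : baire) m m' : (m <= m')%N ->
  (\sum_(j < m.+1) f j <= \sum_(j < m'.+1) f j)%N.
Proof.
move=> mm; rewrite -!(big_mkord xpredT f) [X in (_ <= X)%N](@big_cat_nat _ _ _ m.+1) //=; last by lia.
Qed.

Lemma Fs_ge (f : baire) i m : (i <= m)%N -> (f i <= Fs f m)%N.
Proof. by move=> im; rewrite /Fs; apply: leq_trans (leq_addr _ _); exact: sum_ge. Qed.

Lemma Fs_gt (f : baire) m : (m < Fs f m)%N.
Proof. by rewrite /Fs; lia. Qed.

Lemma Fs_mono (f : baire) m m' : (m <= m')%N -> (Fs f m <= Fs f m')%N.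
Proof. by move=> mm; rewrite /Fs; have := sum_mono f mm; lia. Qed.

Fixpoint rr (f : baire) (k : nat) : nat :=
  if k is k'.+1 then (Fs f (rr f k')).+1 else 0%N.

Lemma rr_lt (f : baire) k : (rr f k < rr f k.+1)%N.
Proof. by rewrite /=; have := Fs_gt f (rr f k); lia. Qed.

Lemma rr_mono (f : baire) j k : (j <= k)%N -> (rr f j <= rr f k)%N.
Proof.
elim: k => [|k IH]; first by rewrite leqn0 => /eqP ->.
rewrite leq_eqVlt => /orP[/eqP -> //|]; rewrite ltnS => /IH h.
by apply: leq_trans h (ltnW (rr_lt f k)).
Qed.

Lemma rr_ge (f : baire) k : (k <= rr f k)%N.
Proof. by elim: k => // k IH; have := rr_lt f k; lia. Qed.

Lemma rr_gap (f : baire) j k n : (n < rr f j)%N -> (rr f k <= n)%N ->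
  (rr f k.+1 <= rr f j)%N.
Proof.
move=> nj kn; apply: rr_mono; rewrite ltnNge; apply/negP => jk.
have := rr_mono f jk; lia.
Qed.

Lemma block (f : baire) n : exists k, (rr f k <= n < rr f k.+1)%N.
Proof.
have ex : exists k, (n < rr f k)%N by exists n.+1; have := rr_ge f n.+1; lia.
case: (ex_minnP ex) => k nk kmin.
case: k nk kmin => [|k] nk kmin; first by rewrite /= in nk.
exists k; rewrite nk andbT leqNgt; apply/negP => /kmin; lia.
Qed.

Definition inR (f : baire) (m : nat) : bool := has (fun k => rr f k == m) (iota 0 m.+1).

Lemma inRP (f : baire) m : inR f m <-> exists k, rr f k = m.
Proof.
split.
  by move=> /hasP [k _ /eqP e]; exists k.
move=> [k e]; apply/hasP; exists k; last by rewrite e.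
by rewrite mem_iota /= add0n ltnS -e rr_ge.
Qed.

Definition S (f : baire) (m : nat) : nat :=
  if inR f m then Fs f (Fs f m).+1 else 0%N.

Lemma S_rr (f : baire) k : S f (rr f k) = Fs f (rr f k.+1).
Proof. by rewrite /S (_ : inR f (rr f k) = true) //; apply/inRP; exists k. Qed.

Lemma S_notR (f : baire) m : ~ inR f m -> S f m = 0%N.
Proof. by rewrite /S => /negP/negbTE ->. Qed.

Lemma PsetP (x : baire) : Pset x <-> forall N, exists n, (N <= n)%N /\ x n <> 0%N.
Proof.
rewrite /Pset /zero_set; split.
  move=> h N; apply/not_existsP => hn; apply: h; exists N => n Nn.
  by have := hn n; move/not_andP => [//|/contrapT].
by move=> h [N hN]; have [n [Nn xn]] := h N; apply: xn; apply: hN.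
Qed.

Lemma S_Pset (f : baire) : Pset (S f).
Proof.
apply/PsetP => N; exists (rr f N); split; first exact: rr_ge.
by rewrite S_rr; have := Fs_gt f (rr f N.+1); lia.
Qed.

Lemma not_le_star (x y : baire) :
  (forall N, exists n, (N <= n)%N /\ (y n < x n)%N) -> ~ le_star x y.
Proof. by move=> h [N hN]; have [n [Nn lt]] := h N; have := hN n Nn; lia. Qed.

Lemma not_le_starP (x y : baire) : ~ le_star x y ->
  forall N, exists n, (N <= n)%N /\ (y n < x n)%N.
Proof.
move=> h N; apply/not_existsP => hn; apply: h; exists N => n Nn.
have := hn n; move/not_andP => [//|h2]; rewrite leqNgt; exact/negP.
Qed.

Definition nxt (q : baire) (n : nat) : nat :=
  match pselect (exists m, (n < m)%N /\ q m <> 0%N) with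
  | left h => sval (cid h) | right _ => 0%N end.

Lemma nxtP q : Pset q -> forall n, (n < nxt q n)%N /\ q (nxt q n) <> 0%N.
Proof.
move=> /PsetP Pq n; rewrite /nxt; case: pselect => [h|h]; last first.
  by exfalso; apply: h; have [m [nm qm]] := Pq n.+1; exists m.
by case: (cid h).
Qed.

Lemma unb_to_incomp U : unbounded_family U -> incomparable_family (S @` U).
Proof.
move=> hU; split; first by move=> _ [u _ <-]; exact: S_Pset.
move=> p Pp; have a := nxtP Pp.
pose g n := (\sum_(i < n.+1) p i + nxt p (nxt p n))%N.
have [u Uu ug] : exists2 u, U u & ~ le_star u g.
  apply: contrapT => hn; apply: hU; exists g => f Uf.
  by apply: contrapT => nl; apply: hn; exists f.
have sp := not_le_starP ug.
exists (S u); first by exists u.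
split.
- apply: not_le_star => N; have [n [Nn gn]] := sp N.
  have [k /andP[kn nk]] := block u n.
  have [n1 p1] := a n.
  case: (pselect (inR u (nxt p n))) => R1; last first.
    by exists (nxt p n); split; [lia|rewrite S_notR //; lia].
  have [j ej] := (inRP u _).1 R1.
  have [n2 p2] := a (nxt p n).
  case: (pselect (inR u (nxt p (nxt p n)))) => R2; last first.
    by exists (nxt p (nxt p n)); split; [lia|rewrite S_notR //; lia].
  exfalso; have [j' ej'] := (inRP u _).1 R2.
  have h1 : (rr u j.+1 <= rr u j')%N.
    by apply: (@rr_gap _ _ _ (nxt p n)); lia.
  have e1 : rr u j.+1 = (Fs u (rr u j)).+1 by [].
  have h2 : (Fs u n <= Fs u (rr u j))%N by apply: Fs_mono; lia.
  have h3 := Fs_ge u (leqnn n).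
  rewrite /g in gn; lia.
- apply: not_le_star => N; have [n [Nn gn]] := sp (rr u N).
  have [k /andP[kn nk]] := block u n.
  have kN : (N <= k)%N.
    rewrite leqNgt; apply/negP => kN; have := rr_mono u kN; lia.
  exists (rr u k); split; first by have := rr_ge u k; lia.
  rewrite S_rr.
  have h2 : (Fs u n <= Fs u (rr u k.+1))%N by apply: Fs_mono; lia.
  have h3 := Fs_ge u (leqnn n).
  have h4 := sum_ge p kn.
  rewrite /g in gn; lia.
Qed.

Definition H (q : baire) (n : nat) : nat := (\sum_(i < n.+1) q i + nxt q (nxt q n))%N.

Lemma comp_to_dom F : comparable_family F -> dominating_family (H @` F).
Proof.
move=> [FP Fc] g; have [q Fq hq] := Fc (S g) (@S_Pset g).
exists (H q); first by exists q.
have a := nxtP (FP q Fq).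
case: hq => [[N hN]|[N hN]].
- exists (rr g N) => n Nn.
  have [k /andP[kn nk]] := block g n.
  have kN : (N <= k)%N.
    rewrite leqNgt; apply/negP => kN; have := rr_mono g kN; lia.
  have := hN (rr g k) (leq_trans kN (rr_ge g k)); rewrite S_rr => hq.
  have h2 : (Fs g n <= Fs g (rr g k.+1))%N by apply: Fs_mono; lia.
  have h3 := Fs_ge g (leqnn n).
  have h4 := sum_ge q kn.
  rewrite /H; lia.
- exists N => n Nn.
  have [n1 p1] := a n.
  case: (pselect (inR g (nxt q n))) => R1; last first.
    by exfalso; have := hN (nxt q n) ltac:(lia); rewrite S_notR //; lia.
  have [j ej] := (inRP g _).1 R1.
  have [n2 p2] := a (nxt q n).
  case: (pselect (inR g (nxt q (nxt q n)))) => R2; last first.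
    by exfalso; have := hN (nxt q (nxt q n)) ltac:(lia); rewrite S_notR //; lia.
  have [j' ej'] := (inRP g _).1 R2.
  have h1 : (rr g j.+1 <= rr g j')%N.
    by apply: (@rr_gap _ _ _ (nxt q n)); lia.
  have e1 : rr g j.+1 = (Fs g (rr g j)).+1 by [].
  have h2 : (Fs g n <= Fs g (rr g j))%N by apply: Fs_mono; lia.
  have h3 := Fs_ge g (leqnn n).
  rewrite /H; lia.
Qed.

Lemma incomp_unb F : incomparable_family F -> unbounded_family F.
Proof.
move=> [FP Fi] [g hg].
have Pp : Pset (fun n => (g n).+1) by apply/PsetP => N; exists N; split.
have [q Fq [h1 h2]] := Fi _ Pp; apply: h2.
have [N hN] := hg q Fq; exists N => n Nn; have := hN n Nn; lia.
Qed.

Definition succf (f : baire) : baire := fun n => (f n).+1.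

Lemma dom_comp D : dominating_family D -> comparable_family (succf @` D).
Proof.
move=> hD; split.
  by move=> _ [d _ <-]; apply/PsetP => N; exists N.
move=> p Pp; have [d Dd [N hN]] := hD p.
exists (succf d); first by exists d.
by left; exists N => n Nn; rewrite /succf; have := hN n Nn; lia.
Qed.

Lemma setT_unb : unbounded_family setT.
Proof.
move=> [g hg]; have [N hN] := hg (succf g) I.
by have := hN N (leqnn N); rewrite /succf; lia.
Qed.

Lemma setT_dom : dominating_family setT.
Proof. by move=> g; exists g => //; exists 0%N. Qed.

Local Open Scope card_scope.

Theorem mainTheorem1 :
  min_card_equal incomparable_family unbounded_family /\
  min_card_equal comparable_family dominating_family.
Proof.
split.
- apply: transfer.
  + by move=> A hA; exists A; split; [exact: incomp_unb|exact: card_lexx].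
  + by move=> B hB; exists (S @` B); split; [exact: unb_to_incomp|exact: card_image_le].
  + by exists (S @` setT); exact: unb_to_incomp setT_unb.
- apply: transfer.
  + by move=> A hA; exists (H @` A); split; [exact: comp_to_dom|exact: card_image_le].
  + by move=> B hB; exists (succf @` B); split; [exact: dom_comp|exact: card_image_le].
  + by exists (succf @` setT); exact: dom_comp setT_dom.
Qed.
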